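(* Let $n\le m$, let $\mathbf g\in\mathbb F_{q^m}^n$ have $\mathbb F_q$-linearly independent coordinates, let $1\le k\le n$, let $V\subseteq\mathbb F_{q^m}$ be an $\mathbb F_q$-subspace of dimension $s$ with $0<s<m$, and let $B$ be an $\mathbb F_q$-basis of $\mathbb F_{q^m}$. (1) If $m=n$, then $\mathrm{Stab}_R\bigl(\phi_B^{\mathrm{mat}}(\mathcal G(\mathbf g,k)\cap V^n)\bigr)$ contains an $\mathbb F_q$-subalgebra isomorphic to $\mathbb F_{q^m}$; in particular its $\mathbb F_q$-dimension is at least $m$. (2) For every $\mathbb F_q$-linear code $\mathcal C\subseteq\mathbb F_{q^m}^n$, $\dim_{\mathbb F_q}\mathrm{Ann}_L\bigl(\phi_B^{\mathrm{mat}}(\mathcal C\cap V^n)\bigr)\ge m(m-s)$, and consequently $\dim_{\mathbb F_q}\mathrm{Stab}_L\bigl(\phi_B^{\mathrm{mat}}(\mathcal C\cap V^n)\bigr)\ge m(m-s)+1$.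
   Context: For $B=(b_1,\dots,b_m)$ an $\mathbb F_q$-basis of $\mathbb F_{q^m}$, $\phi_B:\mathbb F_{q^m}\to\mathbb F_q^m$ maps $x=\sum_j x_jb_j$ to $(x_1,\dots,x_m)$, and $\phi_B^{\mathrm{mat}}:\mathbb F_{q^m}^n\to\mathbb F_q^{m\times n}$ maps $(x_1,\dots,x_n)$ to the $m\times n$ matrix whose $i$-th column is $\phi_B(x_i)^\top$. The Gabidulin code $\mathcal G(\mathbf g,k)$ is the $\mathbb F_{q^m}$-linear code generated by the rows of $(g_j^{q^i})_{0\le i<k,\,1\le j\le n}$. $V^n=V\times\cdots\times V$. For a matrix code $\mathcal M\subseteq\mathbb F_q^{m\times n}$: $\mathrm{Stab}_L(\mathcal M)=\{\mathbf P\in\mathbb F_q^{m\times m}:\mathbf P\mathcal M\subseteq\mathcal M\}$, $\mathrm{Stab}_R(\mathcal M)=\{\mathbf N\in\mathbb F_q^{n\times n}:\mathcal M\mathbf N\subseteq\mathcal M\}$, $\mathrm{Ann}_L(\mathcal M)=\{\mathbf A\in\mathbb F_q^{m\times m}:\mathbf A\mathbf C=\mathbf 0\ \forall\mathbf C\in\mathcal M\}$. *)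

(* Defs.v *)
From HB Require Import structures.
From mathcomp Require Import all_boot all_order all_algebra all_fingroup all_field.
Set Implicit Arguments. Unset Strict Implicit. Unset Printing Implicit Defensive.
Import GRing.Theory.
Local Open Scope ring_scope.

(* F plays F_q (q = #|F|), L : fieldExtType F of dimension m plays F_{q^m}.
   Vectors of L^n are {ffun 'I_n -> L} (an F-vector space). *)

Definition phiB (F : fieldType) (L : fieldExtType F) (m : nat)
  (B : m.-tuple L) (x : L) : 'rV[F]_m := \row_(i < m) coord B i x.

Definition phiBmat (F : fieldType) (L : fieldExtType F) (m n : nat)
  (B : m.-tuple L) (c : {ffun 'I_n -> L}) : 'M[F]_(m, n) :=
  \matrix_(i < m, j < n) coord B i (c j).

Definition gabidulin (F : finFieldType) (L : fieldExtType F) (n : nat)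
  (g : n.-tuple L) (k : nat) (c : {ffun 'I_n -> L}) : Prop :=
  exists a : 'I_k -> L,
    forall j : 'I_n, c j = \sum_(i < k) a i * (tnth g j) ^+ (#|F| ^ i).

Definition inVn (F : fieldType) (L : fieldExtType F) (n : nat)
  (V : {vspace L}) (c : {ffun 'I_n -> L}) : bool := [forall j, c j \in V].

Definition matcode (F : fieldType) (L : fieldExtType F) (m n : nat)
  (B : m.-tuple L) (S : {ffun 'I_n -> L} -> Prop) (V : {vspace L})
  (M : 'M[F]_(m, n)) : Prop :=
  exists c, S c /\ inVn V c /\ M = phiBmat B c.

Definition StabL (F : fieldType) (m n : nat) (M : 'M[F]_(m, n) -> Prop)
  (P : 'M[F]_m) : Prop := forall C, M C -> M (P *m C).
Definition StabR (F : fieldType) (m n : nat) (M : 'M[F]_(m, n) -> Prop)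
  (N : 'M[F]_n) : Prop := forall C, M C -> M (C *m N).
Definition AnnL (F : fieldType) (m n : nat) (M : 'M[F]_(m, n) -> Prop)
  (A : 'M[F]_m) : Prop := forall C, M C -> A *m C = 0.

(* "the F-dimension of the (subspace) S is at least d":
   S contains an F-subspace of dimension >= d *)
Definition dim_ge (F : fieldType) (vT : vectType F) (S : vT -> Prop) (d : nat)
  : Prop := exists U : {vspace vT}, (d <= \dim U)%N /\ forall x, x \in U -> S x.

(* S (a set of n x n matrices) contains an F-subalgebra isomorphic to L:
   an injective F-linear multiplicative map L -> 'M_n landing in S. *)
Definition contains_algebra_iso (F : fieldType) (L : fieldExtType F) (n : nat)
  (S : 'M[F]_n -> Prop) : Prop :=
  exists f : L -> 'M[F]_n,
    [/\ injective f,
        forall (a : F) (x y : L), f (a *: x + y) = a *: f x + f y,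
        forall x y : L, f (x * y) = f x *m f y
      & forall x, S (f x)].

(* Main.v *)
Require Import Defs.
From HB Require Import structures.
From mathcomp Require Import all_boot all_order all_algebra all_fingroup all_field.
From mathcomp Require Import all_solvable.
Import GRing.Theory.
Local Open Scope ring_scope.

Section Frob.
Variables (F : finFieldType) (L : fieldExtType F).

Lemma frob_fix (a : F) i : a ^+ (#|F| ^ i) = a.
Proof.
elim: i => [|i IH]; first by rewrite expn0 expr1.
by rewrite expnSr exprM IH expf_card.
Qed.

Lemma frob_add i (x y : L) : (x + y) ^+ (#|F| ^ i) = x ^+ (#|F| ^ i) + y ^+ (#|F| ^ i).
Proof.
apply: exprDn_pchar.
have [p pr pch] := finPcharP F.
have pchL : p \in [pchar L] by rewrite pchar_lalg.
rewrite (eq_pnat _ (pcharf_eq pchL)) pnatX; apply/orP; left.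
have := abelem_pgroup (fin_ring_pchar_abelem pch).
by rewrite /pgroup cardsT.
Qed.

Lemma frob_scale i (a : F) (x : L) : (a *: x) ^+ (#|F| ^ i) = a *: x ^+ (#|F| ^ i).
Proof. by rewrite exprZn frob_fix. Qed.

Lemma frob0 i : (0 : L) ^+ (#|F| ^ i) = 0.
Proof. rewrite expr0n expn_eq0. have -> : (#|F| == 0%N) = false by apply/negbTE; rewrite -lt0n (ltn_trans _ (finNzRing_gt1 F)). by []. Qed.

Lemma frob_sum i (I : finType) (c : I -> F) (y : I -> L) :
  (\sum_l c l *: y l) ^+ (#|F| ^ i) = \sum_l c l *: y l ^+ (#|F| ^ i).
Proof.
rewrite (big_morph (fun x : L => x ^+ (#|F| ^ i)) (frob_add i) (frob0 i)).
by apply: eq_bigr => l _; rewrite frob_scale.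
Qed.
End Frob.
Section P1.
Variables (F : finFieldType) (L : fieldExtType F) (n : nat) (g : n.-tuple L).
Hypothesis gbasis : basis_of fullv g.

Definition Nm (a : L) : 'M[F]_n := \matrix_(l, j) coord g l (a * g`_j).

Lemma Nm_lin : linear_for *:%R Nm.
Proof.
move=> a x y; apply/matrixP => l j; rewrite !mxE mulrDl linearD /=.
by rewrite -scalerAl linearZ.
Qed.

HB.instance Definition _ := GRing.isLinear.Build F L 'M[F]_n *:%R Nm Nm_lin.

Lemma g_decomp v : v = \sum_i coord g i v *: g`_i.
Proof. by apply: (coord_basis gbasis); rewrite memvf. Qed.

Lemma Nm_mul x y : Nm (x * y) = Nm x *m Nm y.
Proof.
apply/matrixP => l j; rewrite !mxE -mulrA {1}(g_decomp (y * g`_j)).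
rewrite mulr_sumr linear_sum; apply: eq_bigr => p _.
by rewrite -scalerAr linearZ /= !mxE mulrC.
Qed.

Lemma Nm_inj : (0 < n)%N -> injective Nm.
Proof.
move=> n0 x y e.
have e0 : Nm (x - y) = 0 by rewrite raddfB /= e subrr.
have g0 : g`_0 != 0.
  apply: (free_not0 (basis_free gbasis)); apply: mem_nth; by rewrite size_tuple.
have : (x - y) * g`_0 = 0.
  rewrite (g_decomp ((x - y) * g`_0)); apply: big1 => l _.
  have := congr1 (fun M : 'M[F]_n => M l (Ordinal n0)) e0.
  by rewrite /= !mxE => ->; rewrite scale0r.
by move/eqP; rewrite mulf_eq0 (negbTE g0) orbF subr_eq0 => /eqP.
Qed.

Lemma phiBmat_mul m (B : m.-tuple L) (c : {ffun 'I_n -> L}) (N : 'M[F]_n) :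
  phiBmat B c *m N = phiBmat B [ffun j => \sum_l N l j *: c l].
Proof.
apply/matrixP => i j; rewrite /phiBmat !mxE ffunE linear_sum.
by apply: eq_bigr => l _; rewrite linearZ /= mxE mulrC.
Qed.

Lemma StabR_Nm m (B : m.-tuple L) k V a :
  StabR (matcode B (gabidulin g k) V) (Nm a).
Proof.
move=> C [c [[b hb] [vc ->]]].
exists [ffun j => \sum_l Nm a l j *: c l]; split; last split.
- exists (fun i => b i * a ^+ (#|F| ^ i)) => j; rewrite ffunE.
  under eq_bigr => l _ do rewrite hb scaler_sumr.
  rewrite exchange_big /=; apply: eq_bigr => i _.
  under eq_bigr => l _ do rewrite scalerAr.
  rewrite -mulr_sumr -mulrA -exprMn; congr (_ * _).
  rewrite -frob_sum; congr (_ ^+ _).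
  rewrite [in RHS](g_decomp (a * tnth g j)); apply: eq_bigr => l _.
  by rewrite mxE !(tnth_nth 0).
- apply/forallP => j; rewrite ffunE; apply: rpred_sum => l _; apply: rpredZ.
  exact: (forallP vc).
- by rewrite phiBmat_mul.
Qed.
End P1.
Section P2.
Variables (F : fieldType) (L : fieldExtType F) (m n : nat) (B : m.-tuple L).
Variables (V : {vspace L}) (C : {vspace {ffun 'I_n -> L}}).

Definition Rt : 'M[F]_(m, \dim V) := \matrix_(l, i) coord B l (vbasis V)`_i.
Definition Rb := row_base (kermx Rt).
Definition Uf : 'Hom('M[F]_(m, \rank (kermx Rt)), 'M[F]_m) := linfun (mulmxr Rb).
Definition U := limg Uf.

Lemma U_Rt u : u \in U -> u *m Rt = 0.
Proof.
case/memv_imgP => Y _ ->; rewrite lfunE /= -mulmxA.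
have /sub_kermxP -> : (Rb <= kermx Rt)%MS by rewrite /Rb eq_row_base.
by rewrite mulmx0.
Qed.

Lemma phiBmat_V c : inVn V c ->
  phiBmat B c = Rt *m \matrix_(i < \dim V, j < n) coord (vbasis V) i (c j).
Proof.
move=> vc; apply/matrixP => l j; rewrite /phiBmat !mxE.
rewrite {1}(coord_vbasis (forallP vc j)) linear_sum; apply: eq_bigr => i _.
by rewrite linearZ /= !mxE mulrC.
Qed.

Lemma U_ann u : u \in U -> AnnL (matcode B (fun c => c \in C) V) u.
Proof.
move=> uU M [c [_ [vc ->]]]; by rewrite phiBmat_V // mulmxA U_Rt // mul0mx.
Qed.

Lemma dimU : \dim U = (m * \rank (kermx Rt))%N.
Proof.
rewrite /U limg_dim_eq ?dimvf ?dim_matrix //.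
apply/eqP; rewrite capfv; apply/lker0P => x y.
rewrite !lfunE /=; apply: row_free_inj; exact: row_base_free.
Qed.

Lemma dimU_ge : (m * (m - \dim V) <= \dim U)%N.
Proof. by rewrite dimU mxrank_ker leq_mul2l leq_sub2l ?rank_leq_col ?orbT. Qed.

Hypotheses (Bbasis : basis_of fullv B) (V0 : (0 < \dim V)%N).

Lemma one_notin : (1%:M : 'M[F]_m) \notin U.
Proof.
apply/negP => /U_Rt; rewrite mul1mx => R0.
have v0 : (vbasis V)`_0 != 0.
  apply: (free_not0 (basis_free (vbasisP V))); apply: mem_nth; by rewrite size_tuple.
case/negP: v0; apply/eqP.
rewrite (coord_basis Bbasis (memvf ((vbasis V)`_0))); apply: big1 => l _.
have := congr1 (fun M : 'M[F]_(m, \dim V) => M l (Ordinal V0)) R0.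
by rewrite /Rt !mxE => ->; rewrite scale0r.
Qed.

Definition U2 := (U + <[1%:M : 'M[F]_m]>)%VS.

Lemma dimU2 : (0 < m)%N -> \dim U2 = (\dim U + 1)%N.
Proof.
move=> m0.
have nz : (1%:M : 'M[F]_m) != 0.
  apply/negP => /eqP/matrixP/(_ (Ordinal m0) (Ordinal m0)).
  by rewrite !mxE eqxx /= => /eqP; rewrite oner_eq0.
rewrite /U2 dimv_disjoint_sum ?dim_vline ?nz //.
apply/eqP; rewrite -subv0; apply/subvP => x /memv_capP [xU /vlineP [a xa]].
rewrite memv0; apply/eqP; move: xU; rewrite xa.
have [->|a0] := eqVneq a 0; first by rewrite scale0r.
move=> aU; case/negP: one_notin.
have -> : (1%:M : 'M[F]_m) = a^-1 *: (a *: 1%:M) by rewrite scalerA mulVf // scale1r.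
exact: memvZ.
Qed.

Lemma U2_stab x : x \in U2 -> StabL (matcode B (fun c => c \in C) V) x.
Proof.
case/memv_addP => u uU [v /vlineP [a ->] ->] M [c [cC [vc ->]]].
exists (a *: c); split; last split.
- exact: memvZ.
- by apply/forallP => j; rewrite ffunE memvZ // (forallP vc j).
- rewrite mulmxDl phiBmat_V // mulmxA U_Rt // mul0mx add0r -phiBmat_V //.
  rewrite -scalemxAl mul1mx; apply/matrixP => i j.
  by rewrite /phiBmat !mxE ffunE linearZ.
Qed.
End P2.

Theorem mainTheorem5 (F : finFieldType) (L : fieldExtType F) (m n k s : nat)
  (g : n.-tuple L) (V : {vspace L}) (B : m.-tuple L) :
  \dim {: L} = m ->
  (n <= m)%N ->
  free g ->
  (1 <= k <= n)%N ->
  \dim V = s -> (0 < s < m)%N ->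
  basis_of fullv B ->
  (m = n ->
     contains_algebra_iso L (StabR (matcode B (gabidulin g k) V)) /\
     dim_ge (StabR (matcode B (gabidulin g k) V)) m)
  /\
  (forall C : {vspace {ffun 'I_n -> L}},
     dim_ge (AnnL (matcode B (fun c => c \in C) V)) (m * (m - s)) /\
     dim_ge (StabL (matcode B (fun c => c \in C) V)) (m * (m - s) + 1)).
Proof.
move=> dimL nm gfree kn dV /andP [s0 sm] Bb; split.
- move=> mn.
  have gb : basis_of fullv g.
    by rewrite basisEfree gfree subvf /= size_tuple -mn dimL leqnn.
  have n0 : (0 < n)%N by rewrite -mn (leq_ltn_trans _ sm).
  split.
    exists (@Nm _ _ _ g); split.
    + exact: (@Nm_inj _ _ _ g gb n0).
    + exact: (@Nm_lin _ _ _ g).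
    + exact: (@Nm_mul _ _ _ g gb).
    + by move=> x; apply: StabR_Nm.
  exists (limg (linfun (@Nm _ _ _ g))); split.
    rewrite limg_dim_eq ?dimL //.
    apply/eqP; rewrite capfv; apply/lker0P => x y.
    rewrite !lfunE /=; exact: (@Nm_inj _ _ _ g gb n0).
  move=> x /memv_imgP [y _ ->]; rewrite lfunE /=; exact: StabR_Nm.
- move=> C; split.
    exists (@U _ _ m B V); split; first by rewrite -dV dimU_ge.
    move=> x xU; exact: (@U_ann _ _ m n B V C x xU).
  have V0 : (0 < \dim V)%N by rewrite dV.
  exists (@U2 _ _ m B V); split.
    have m0 : (0 < m)%N := ltn_trans s0 sm.
    rewrite dimU2 //. rewrite /GRing.add /= leq_add2r -dV; exact: dimU_ge.
  move=> x xU; exact: (@U2_stab _ _ m n B V C x xU).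
Qed.
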